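(* Let $X$ be a Tychonoff space with $|X|>1$. Then $\mathrm{Rad}(\mathbb{AG}(X))=1$ if $|X|=2$; $\mathrm{Rad}(\mathbb{AG}(X))=2$ if $|X|>2$ and $X$ has an isolated point; and $\mathrm{Rad}(\mathbb{AG}(X))=3$ if $|X|>2$ and $X$ has no isolated point.
   Context: $C(X)$ is the ring of real-valued continuous functions on $X$. $\mathbb{A}(X)$ is the set of nonzero ideals $I$ of $C(X)$ for which there is a nonzero ideal $J$ with $IJ=\{0\}$; $\mathbb{AG}(X)$ has vertex set $\mathbb{A}(X)$, distinct $I,J$ adjacent iff $IJ=\{0\}$. The eccentricity of a vertex is the maximum distance from it to other vertices, and the radius $\mathrm{Rad}$ is the minimum eccentricity over all vertices. *)

(* Defs.v *)
From Stdlib Require Import Reals List Arith.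
Import ListNotations.
Open Scope R_scope.

Record topology (X : Type) := {
  is_open : (X -> Prop) -> Prop;
  open_full : is_open (fun _ => True);
  open_union : forall F : (X -> Prop) -> Prop,
      (forall U, F U -> is_open U) -> is_open (fun x => exists U, F U /\ U x);
  open_inter : forall U V, is_open U -> is_open V -> is_open (fun x => U x /\ V x)
}.
Arguments is_open {X} t U.

Definition is_closed {X} (T : topology X) (F : X -> Prop) : Prop :=
  is_open T (fun x => ~ F x).

Definition R_open (V : R -> Prop) : Prop :=
  forall y, V y -> exists eps, eps > 0 /\ forall z, Rabs (z - y) < eps -> V z.

Definition continuous_on {X} (T : topology X) (f : X -> R) : Prop :=
  forall V, R_open V -> is_open T (fun x => V (f x)).

Definition T1 {X} (T : topology X) : Prop :=
  forall x : X, is_closed T (fun y => y = x).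

Definition completely_regular {X} (T : topology X) : Prop :=
  forall (F : X -> Prop) (x : X), is_closed T F -> ~ F x ->
    exists f : X -> R, continuous_on T f /\ (forall y, 0 <= f y <= 1) /\
      f x = 0 /\ (forall y, F y -> f y = 1).

Definition tychonoff {X} (T : topology X) : Prop := T1 T /\ completely_regular T.

Definition isolated_point {X} (T : topology X) (x : X) : Prop :=
  is_open T (fun y => y = x).

Definition is_ideal {X} (T : topology X) (I : (X -> R) -> Prop) : Prop :=
  (forall f, I f -> continuous_on T f) /\
  I (fun _ => 0) /\
  (forall f g, I f -> I g -> I (fun x => f x + g x)) /\
  (forall f g, continuous_on T g -> I f -> I (fun x => g x * f x)).

Definition nonzero_ideal {X} (T : topology X) (I : (X -> R) -> Prop) : Prop :=
  is_ideal T I /\ exists f, I f /\ exists x, f x <> 0.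

(** The product ideal IJ: finite sums of products f g with f in I, g in J. *)
Definition ideal_prod {X} (I J : (X -> R) -> Prop) (h : X -> R) : Prop :=
  exists l : list ((X -> R) * (X -> R)),
    Forall (fun p => I (fst p) /\ J (snd p)) l /\
    forall x, h x = fold_right (fun p acc => fst p x * snd p x + acc) 0 l.

Definition prod_zero {X} (I J : (X -> R) -> Prop) : Prop :=
  forall h, ideal_prod I J h -> forall x, h x = 0.

Definition ideal_eq {X} (I J : (X -> R) -> Prop) : Prop := forall f, I f <-> J f.

Definition AG_vertex {X} (T : topology X) (I : (X -> R) -> Prop) : Prop :=
  nonzero_ideal T I /\ exists J, nonzero_ideal T J /\ prod_zero I J.

Definition AG_adj {X} (T : topology X) (I J : (X -> R) -> Prop) : Prop :=
  AG_vertex T I /\ AG_vertex T J /\ ~ ideal_eq I J /\ prod_zero I J.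

Fixpoint AG_walk {X} (T : topology X) (n : nat) (I J : (X -> R) -> Prop) : Prop :=
  match n with
  | O => AG_vertex T I /\ ideal_eq I J
  | S m => exists K, AG_adj T I K /\ AG_walk T m K J
  end.

Definition AG_dist {X} (T : topology X) (I J : (X -> R) -> Prop) (n : nat) : Prop :=
  AG_walk T n I J /\ forall m, (m < n)%nat -> ~ AG_walk T m I J.

Definition AG_ecc {X} (T : topology X) (I : (X -> R) -> Prop) (k : nat) : Prop :=
  (forall J, AG_vertex T J -> exists m, (m <= k)%nat /\ AG_dist T I J m) /\
  (exists J, AG_vertex T J /\ AG_dist T I J k).

Definition AG_rad {X} (T : topology X) (r : nat) : Prop :=
  (exists I, AG_vertex T I /\ AG_ecc T I r) /\
  (forall I k, AG_vertex T I -> AG_ecc T I k -> (r <= k)%nat).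

Definition card_eq2 (X : Type) : Prop :=
  exists a b : X, a <> b /\ forall x, x = a \/ x = b.
Definition card_gt2 (X : Type) : Prop :=
  exists a b c : X, a <> b /\ a <> c /\ b <> c.

(* Main.v *)
Require Import Defs.
From Stdlib Require Import Reals Lra Lia List Classical FunctionalExtensionality PropExtensionality ClassicalEpsilon.
Import ListNotations.
Open Scope R_scope.


Lemma open_ext {X} (T : topology X) (P Q : X -> Prop) :
  (forall x, P x <-> Q x) -> is_open T P -> is_open T Q.
Proof.
  intros H HP. replace Q with P; auto.
  apply functional_extensionality; intro x; apply propositional_extensionality; auto.
Qed.

Lemma open_empty {X} (T : topology X) : is_open T (fun _ => False).
Proof.
  eapply open_ext; [|apply (open_union _ T (fun _ => False))].
  - intros x; split; [intros [U [[] _]] | intros []].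
  - intros U [].
Qed.

Lemma cont_ext {X} (T : topology X) f g :
  (forall x, f x = g x) -> continuous_on T f -> continuous_on T g.
Proof.
  intros H Hf V HV. apply (open_ext _ (fun x => V (f x))).
  - intros x; rewrite H; tauto.
  - auto.
Qed.

Lemma cont_const {X} (T : topology X) c : continuous_on T (fun _ => c).
Proof.
  intros V HV. destruct (classic (V c)).
  - eapply open_ext; [|apply open_full]. intros; tauto.
  - eapply open_ext; [|apply open_empty]. intros; tauto.
Qed.

Ltac rabs := unfold Rabs in *; repeat match goal with |- context [Rcase_abs ?x] => destruct (Rcase_abs x) | H: context [Rcase_abs ?x] |- _ => destruct (Rcase_abs x) end; lra.

Lemma ball_open a e : R_open (fun z => Rabs (z - a) < e).
Proof.
  intros y Hy. exists (e - Rabs (y-a)). split. lra. intros z Hz.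
  pose proof (Rabs_triang (z - y) (y - a)).
  replace (z - y + (y - a)) with (z - a) in H by ring. lra.
Qed.

Definition jcont (op : R -> R -> R) := forall a b eps, eps > 0 -> exists d, d > 0 /\
  forall u v, Rabs (u - a) < d -> Rabs (v - b) < d -> Rabs (op u v - op a b) < eps.

Lemma cont_bin {X} (T : topology X) op f g : jcont op ->
  continuous_on T f -> continuous_on T g -> continuous_on T (fun x => op (f x) (g x)).
Proof.
  intros Hop Hf Hg V HV.
  set (F := fun U : X -> Prop => exists a b d, d > 0 /\
     (forall u v, Rabs (u - a) < d -> Rabs (v - b) < d -> V (op u v)) /\
     U = (fun x => Rabs (f x - a) < d /\ Rabs (g x - b) < d)).
  apply (open_ext _ (fun x => exists U, F U /\ U x)).
  - intros x; split.
    + intros [U [[a [b [d [Hd [HU ->]]]]] [H1 H2]]]. auto.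
    + intros Hx. destruct (HV _ Hx) as [e [He HVe]].
      destruct (Hop (f x) (g x) e He) as [d [Hd Hd']].
      exists (fun y => Rabs (f y - f x) < d /\ Rabs (g y - g x) < d). split.
      * exists (f x), (g x), d. refine (conj Hd (conj _ eq_refl)).
        intros u v Hu Hv. apply HVe. apply Hd'; auto.
      * rewrite !Rminus_diag, Rabs_R0; split; lra.
  - apply open_union. intros U [a [b [d [Hd [_ ->]]]]].
    apply open_inter; [apply (Hf (fun z => Rabs (z - a) < d)) | apply (Hg (fun z => Rabs (z - b) < d))]; apply ball_open.
Qed.

Lemma cont_un {X} (T : topology X) (phi : R -> R) f :
  (forall a eps, eps > 0 -> exists d, d > 0 /\ forall u, Rabs (u - a) < d -> Rabs (phi u - phi a) < eps) ->
  continuous_on T f -> continuous_on T (fun x => phi (f x)).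
Proof.
  intros H Hf. apply (cont_bin T (fun u _ => phi u) f (fun _ => 0)); auto.
  - intros a b eps He. destruct (H a eps He) as [d [Hd Hd']]. exists d; split; auto.
  - apply cont_const.
Qed.

Lemma jcont_plus : jcont Rplus.
Proof.
  intros a b eps He. exists (eps/2). split. lra. intros u v Hu Hv. rabs.
Qed.

Lemma jcont_mult : jcont Rmult.
Proof.
  intros a b eps He. set (M := Rabs a + Rabs b + 1).
  assert (HM : M > 0) by (unfold M; pose proof (Rabs_pos a); pose proof (Rabs_pos b); lra).
  exists (Rmin 1 (eps / (2 * M))). split.
  { apply Rmin_pos. lra. apply Rdiv_lt_0_compat; lra. }
  intros u v Hu Hv.
  set (d := Rmin 1 (eps / (2 * M))) in *.
  assert (d1 : d <= 1) by apply Rmin_l.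
  assert (d2 : d <= eps / (2*M)) by apply Rmin_r.
  assert (d2' : d * M <= eps / 2).
  { apply (Rmult_le_compat_r M) in d2; [|lra]. replace (eps / (2*M) * M) with (eps/2) in d2 by (field; lra). lra. }
  replace (u * v - a * b) with ((u-a)*(v-b) + a*(v-b) + b*(u-a)) by ring.
  pose proof (Rabs_triang ((u-a)*(v-b) + a*(v-b)) (b*(u-a))).
  pose proof (Rabs_triang ((u-a)*(v-b)) (a*(v-b))).
  rewrite !Rabs_mult in *.
  pose proof (Rabs_pos (u-a)). pose proof (Rabs_pos (v-b)). pose proof (Rabs_pos a). pose proof (Rabs_pos b).
  assert (Rabs (u-a) * Rabs (v-b) <= d * 1) by (apply Rmult_le_compat; lra).
  assert (Rabs a * Rabs (v-b) <= Rabs a * d) by (apply Rmult_le_compat_l; lra).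
  assert (Rabs b * Rabs (u-a) <= Rabs b * d) by (apply Rmult_le_compat_l; lra).
  unfold M in d2'. nra.
Qed.

Lemma cont_plus {X} (T : topology X) f g : continuous_on T f -> continuous_on T g ->
  continuous_on T (fun x => f x + g x).
Proof. apply (cont_bin T Rplus), jcont_plus. Qed.
Lemma cont_mult {X} (T : topology X) f g : continuous_on T f -> continuous_on T g ->
  continuous_on T (fun x => f x * g x).
Proof. apply (cont_bin T Rmult), jcont_mult. Qed.

Definition rpos (t : R) := (t + Rabs t) / 2.

Lemma cont_rpos {X} (T : topology X) f : continuous_on T f -> continuous_on T (fun x => rpos (f x)).
Proof.
  apply cont_un. intros a eps He. exists eps. split; auto. intros u Hu. unfold rpos.
  pose proof (Rabs_triang_inv u a). pose proof (Rabs_triang_inv a u).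
  replace (a - u) with (- (u - a)) in H0 by ring. rewrite Rabs_Ropp in H0. rabs.
Qed.

Lemma rpos_pos t : t > 0 -> rpos t = t.
Proof. intros; unfold rpos; rabs. Qed.
Lemma rpos_neg t : t <= 0 -> rpos t = 0.
Proof. intros; unfold rpos; rabs. Qed.

Lemma cont_abs {X} (T : topology X) f : continuous_on T f -> continuous_on T (fun x => Rabs (f x)).
Proof.
  apply cont_un. intros a eps He. exists eps. split; auto. intros u Hu.
  pose proof (Rabs_triang_inv u a). pose proof (Rabs_triang_inv a u).
  replace (a - u) with (- (u - a)) in H0 by ring. rewrite Rabs_Ropp in H0. rabs.
Qed.

Lemma prod_zero_pt {X} (I J : (X -> R) -> Prop) f g :
  prod_zero I J -> I f -> J g -> forall x, f x * g x = 0.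
Proof.
  intros H Hf Hg x. specialize (H (fun x => f x * g x)).
  apply H. exists [(f, g)]. split.
  - constructor; auto.
  - intros y; simpl; ring.
Qed.

Lemma pt_prod_zero {X} (I J : (X -> R) -> Prop) :
  (forall f g, I f -> J g -> forall x, f x * g x = 0) -> prod_zero I J.
Proof.
  intros H h [l [Hl Hh]] x. rewrite Hh. clear Hh h.
  induction Hl as [|p l [H1 H2] Hl IH]; simpl. reflexivity.
  rewrite IH, (H _ _ H1 H2). ring.
Qed.

Lemma prod_zero_sym {X} (I J : (X -> R) -> Prop) : prod_zero I J -> prod_zero J I.
Proof.
  intros H. apply pt_prod_zero. intros f g Hf Hg x. rewrite Rmult_comm.
  exact (prod_zero_pt I J g f H Hg Hf x).
Qed.

Lemma prod_zero_eqr {X} (I J J' : (X -> R) -> Prop) : ideal_eq J J' -> prod_zero I J -> prod_zero I J'.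
Proof.
  intros E H. apply pt_prod_zero. intros f g Hf Hg x.
  apply (prod_zero_pt I J f g H Hf). apply E; auto.
Qed.

Lemma prod_zero_eql {X} (I I' J : (X -> R) -> Prop) : ideal_eq I I' -> prod_zero I J -> prod_zero I' J.
Proof.
  intros E H. apply prod_zero_sym. apply (prod_zero_eqr J I I' E). apply prod_zero_sym; auto.
Qed.

Lemma ideal_eq_sym {X} (I J : (X -> R) -> Prop) : ideal_eq I J -> ideal_eq J I.
Proof. intros H f; split; apply H. Qed.

Lemma self_not_zero {X} (T : topology X) I : nonzero_ideal T I -> ~ prod_zero I I.
Proof.
  intros [_ [f [Hf [x Hx]]]] H. pose proof (prod_zero_pt I I f f H Hf Hf x).
  apply Hx. nra.
Qed.

Definition Zle {X} (T : topology X) (G : X -> R) (f : X -> R) : Prop :=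
  continuous_on T f /\ forall x, G x <= 0 -> f x = 0.

Lemma Zle_ideal {X} (T : topology X) G : is_ideal T (Zle T G).
Proof.
  split; [|split; [|split]].
  - intros f [H _]; auto.
  - split. apply cont_const. auto.
  - intros f g [Hf Hf'] [Hg Hg']. split. apply cont_plus; auto.
    intros x Hx. rewrite Hf', Hg'; auto; ring.
  - intros f g Hg [Hf Hf']. split. apply cont_mult; auto.
    intros x Hx. rewrite Hf'; auto; ring.
Qed.

Lemma Zle_pos {X} (T : topology X) G : continuous_on T G -> Zle T G (fun x => rpos (G x)).
Proof.
  intros HG. split. apply cont_rpos; auto. intros x Hx. apply rpos_neg; auto.
Qed.

Lemma Zle_anti {X} (T : topology X) G : prod_zero (Zle T G) (Zle T (fun x => - G x)).
Proof.
  apply pt_prod_zero. intros f g [_ Hf] [_ Hg] x.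
  destruct (Rle_dec (G x) 0). rewrite Hf; auto; ring. rewrite Hg; [ring|lra].
Qed.

Lemma cont_opp {X} (T : topology X) G : continuous_on T G -> continuous_on T (fun x => - G x).
Proof.
  intros H. apply (cont_ext T (fun x => (-1) * G x)). intros; ring.
  apply cont_mult; auto. apply cont_const.
Qed.

Lemma Zle_nonzero {X} (T : topology X) G y : continuous_on T G -> G y > 0 -> nonzero_ideal T (Zle T G).
Proof.
  intros HG Hy. split. apply Zle_ideal. exists (fun x => rpos (G x)). split. apply Zle_pos; auto.
  exists y. rewrite rpos_pos; lra.
Qed.

Lemma Zle_vertex {X} (T : topology X) G y1 y2 : continuous_on T G -> G y1 > 0 -> G y2 < 0 ->
  AG_vertex T (Zle T G).
Proof.
  intros HG H1 H2. split. apply (Zle_nonzero T G y1); auto.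
  exists (Zle T (fun x => - G x)). split. apply (Zle_nonzero T _ y2). apply cont_opp; auto. lra.
  apply Zle_anti.
Qed.

Lemma walk_min {X} (T : topology X) n I J : AG_walk T n I J -> exists m, (m <= n)%nat /\ AG_dist T I J m.
Proof.
  revert I J. induction n as [n IH] using (well_founded_induction Wf_nat.lt_wf). intros I J H.
  destruct (classic (exists m, (m < n)%nat /\ AG_walk T m I J)) as [[m [Hm Hw]]|Hno].
  - destruct (IH m Hm I J Hw) as [k [Hk Hd]]. exists k. split; auto. apply Nat.le_trans with m; auto with arith.
  - exists n. split; auto. split; auto. intros m Hm Hw. apply Hno; eauto.
Qed.

Lemma walk_vertex {X} (T : topology X) n I J : AG_walk T n I J -> AG_vertex T J.
Proof.
  revert I. induction n; simpl.
  - intros I [[[Hi [f [Hf Hx]]] [K [HK HZ]]] E]. split. split.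
    + destruct Hi as [H1 [H2 [H3 H4]]]. split; [|split; [|split]].
      * intros g Hg. apply H1, E; auto.
      * apply E; auto.
      * intros g h Hg Hh. apply E; apply H3; apply E; auto.
      * intros g h Hh Hg. apply E; apply H4; auto; apply E; auto.
    + exists f; split; auto. apply E; auto.
    + exists K; split; auto. apply (prod_zero_eql I J K E HZ).
  - intros I [K [_ H]]. eauto.
Qed.

Lemma walk0_inv {X} (T : topology X) I J : AG_walk T 0 I J -> ideal_eq I J.
Proof. simpl; tauto. Qed.

Lemma walk1_inv {X} (T : topology X) I J : AG_walk T 1 I J -> prod_zero I J.
Proof.
  simpl. intros [K [[_ [_ [_ H]]] [_ E]]]. eapply prod_zero_eqr; eauto.
Qed.

Lemma walk2_inv {X} (T : topology X) I J : AG_walk T 2 I J ->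
  exists K, nonzero_ideal T K /\ prod_zero I K /\ prod_zero K J.
Proof.
  simpl. intros [K [[_ [[HK _] [_ H]]] [K' [[_ [_ [_ H']]] [_ E]]]]].
  exists K. split; [exact HK | split; [exact H | exact (prod_zero_eqr K K' J E H')]].
Qed.

Lemma ideal_eq_refl {X} (I : (X -> R) -> Prop) : ideal_eq I I.
Proof. intros f; tauto. Qed.

Lemma walk_adj {X} (T : topology X) n I K J : AG_adj T I K -> AG_walk T n K J -> AG_walk T (S n) I J.
Proof. intros; simpl; eauto. Qed.

Lemma walk_0 {X} (T : topology X) I : AG_vertex T I -> AG_walk T 0 I I.
Proof. simpl; split; auto using ideal_eq_refl. Qed.

Lemma separation {X} (T : topology X) r p q : tychonoff T -> r <> p -> r <> q ->
  exists h, continuous_on T h /\ h r = 0 /\ h p = 1 /\ h q = 1.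
Proof.
  intros [HT1 HCR] Hp Hq.
  destruct (HCR (fun y => y = p \/ y = q) r) as [h [Hh [_ [Hr HF]]]].
  - unfold is_closed. eapply open_ext; [|apply (open_inter _ T _ _ (HT1 p) (HT1 q))].
    intros x; simpl; tauto.
  - tauto.
  - exists h. refine (conj _ (conj _ (conj _ _))); auto.
Qed.

Lemma ideal_cont {X} (T : topology X) I f : is_ideal T I -> I f -> continuous_on T f.
Proof. intros [H _] Hf; auto. Qed.

Lemma LB2 {X} (T : topology X) : tychonoff T -> card_gt2 X -> forall I, AG_vertex T I ->
  exists J, AG_vertex T J /\ ~ ideal_eq I J /\ ~ prod_zero I J.
Proof.
  intros Hty [a [b [c [Hab [Hac Hbc]]]]] I [[HI [f [Hf [p Hp]]]] [K [[HK [k [Hk [q Hq]]]] HZ]]].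
  assert (fq : f q = 0).
  { pose proof (prod_zero_pt I K f k HZ Hf Hk q). destruct (Rmult_integral _ _ H); tauto. }
  assert (Hpq : p <> q) by (intro; subst; contradiction).
  assert (Hr : exists r, r <> p /\ r <> q).
  { destruct (classic (a = p)) as [->|Hap].
    - destruct (classic (b = q)) as [->|Hbq].
      + exists c. split; congruence.
      + exists b. split; congruence.
    - destruct (classic (a = q)) as [->|Haq].
      + destruct (classic (b = p)) as [->|Hbp].
        * exists c. split; congruence.
        * exists b. split; congruence.
      + exists a. auto. }
  destruct Hr as [r [Hrp Hrq]].
  destruct (separation T r p q Hty Hrp Hrq) as [h [Hh [Hhr [Hhp Hhq]]]].
  set (G := fun x => h x + (-1/3)).
  assert (HG : continuous_on T G) by (apply cont_plus; auto; apply cont_const).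
  exists (Zle T G). split; [|split].
  - apply (Zle_vertex T G p r HG); unfold G; lra.
  - intros E. pose proof (prod_zero_eql I (Zle T G) K E HZ) as HZ'.
    pose proof (prod_zero_pt _ _ _ _ HZ' (Zle_pos T G HG) Hk q) as H. cbv beta in H.
    rewrite rpos_pos in H by (unfold G; lra). unfold G in H. rewrite Hhq in H.
    apply Hq. nra.
  - intros H. pose proof (prod_zero_pt _ _ _ _ H Hf (Zle_pos T G HG) p) as H'. cbv beta in H'.
    rewrite rpos_pos in H' by (unfold G; lra). unfold G in H'. rewrite Hhp in H'.
    apply Hp. nra.
Qed.

Lemma Ropen_nz : R_open (fun t => t <> 0).
Proof.
  intros y Hy. exists (Rabs y). split. apply Rabs_pos_lt; auto.
  intros z Hz Hz0. subst. rewrite Rminus_0_l, Rabs_Ropp in Hz. lra.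
Qed.

Lemma LB3 {X} (T : topology X) : tychonoff T -> (forall x, ~ isolated_point T x) -> forall I, AG_vertex T I ->
  exists J, AG_vertex T J /\ ~ ideal_eq I J /\ ~ prod_zero I J /\
   (forall L, nonzero_ideal T L -> prod_zero I L -> prod_zero L J -> False).
Proof.
  intros Hty Hiso I [[HI [f [Hf [p Hp]]]] [K [[HK [k [Hk [q Hq]]]] HZ]]].
  assert (fq : f q = 0).
  { pose proof (prod_zero_pt I K f k HZ Hf Hk q). destruct (Rmult_integral _ _ H); tauto. }
  assert (Hfc : continuous_on T f) by (apply (ideal_cont T I); auto).
  assert (Hp' : exists p', p' <> p /\ f p' <> 0).
  { apply NNPP. intros Hno. apply (Hiso p). unfold isolated_point.
    eapply open_ext; [|apply (Hfc _ Ropen_nz)]. intros y; split.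
    - intros Hy. apply NNPP; intros Hyp. apply Hno; eauto.
    - intros ->; auto. }
  destruct Hp' as [p' [Hpp Hfp']].
  destruct (separation T p' p p Hty Hpp Hpp) as [h [Hh [Hhr [Hhp _]]]].
  set (c := Rabs (f p) / 2).
  assert (Hc : c > 0) by (unfold c; pose proof (Rabs_pos_lt _ Hp); lra).
  set (G := fun x => c + (-1) * (Rabs (f x) * h x)).
  assert (HG : continuous_on T G).
  { apply cont_plus. apply cont_const. apply cont_mult. apply cont_const.
    apply cont_mult; auto. apply cont_abs; auto. }
  assert (Gp : G p = - c) by (unfold G; rewrite Hhp; unfold c; field).
  assert (Gp' : G p' = c) by (unfold G; rewrite Hhr; ring).
  assert (Gq : G q = c) by (unfold G; rewrite fq, Rabs_R0; ring).
  exists (Zle T G). split; [|split; [|split]].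
  - apply (Zle_vertex T G p' p HG); lra.
  - intros E. pose proof (prod_zero_eql I (Zle T G) K E HZ) as HZ'.
    pose proof (prod_zero_pt _ _ _ _ HZ' (Zle_pos T G HG) Hk q) as H. cbv beta in H.
    rewrite rpos_pos in H by lra. rewrite Gq in H. apply Hq. nra.
  - intros H. pose proof (prod_zero_pt _ _ _ _ H Hf (Zle_pos T G HG) p') as H'. cbv beta in H'.
    rewrite rpos_pos in H' by lra. rewrite Gp' in H'. apply Hfp'. nra.
  - intros L [HL [l [Hl [y Hy]]]] H1 H2.
    destruct (Rle_dec (G y) 0) as [Hle|Hgt].
    + assert (f y <> 0).
      { intros E. unfold G in Hle. rewrite E, Rabs_R0 in Hle. lra. }
      pose proof (prod_zero_pt _ _ _ _ H1 Hf Hl y). apply Hy. nra.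
    + pose proof (prod_zero_pt _ _ _ _ H2 Hl (Zle_pos T G HG) y) as H'. cbv beta in H'.
      rewrite rpos_pos in H' by lra. apply Hy. nra.
Qed.

Lemma UB_diam {X} (T : topology X) I J : AG_vertex T I -> AG_vertex T J ->
  exists n, (n <= 3)%nat /\ AG_walk T n I J.
Proof.
  intros HvI HvJ.
  pose proof HvI as [HInz [I' [HI'nz ZI]]]. pose proof HvJ as [HJnz [J' [HJ'nz ZJ]]].
  destruct (classic (ideal_eq I J)) as [E|NE].
  { exists 0%nat. split. auto with arith. simpl. auto. }
  destruct (classic (prod_zero I J)) as [Z|NZ].
  { exists 1%nat. split. auto with arith. apply (walk_adj T 0 I J J).
    refine (conj _ (conj _ (conj _ _))); auto. apply walk_0; auto. }
  assert (HvI' : AG_vertex T I') by (split; auto; exists I; split; auto; apply prod_zero_sym; auto).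
  assert (HvJ' : AG_vertex T J') by (split; auto; exists J; split; auto; apply prod_zero_sym; auto).
  set (L := fun f => I' f /\ J' f).
  destruct (classic (exists f, L f /\ exists x, f x <> 0)) as [HL|HL].
  - assert (HLnz : nonzero_ideal T L).
    { split; auto. destruct HI'nz as [[A1 [A2 [A3 A4]]] _]. destruct HJ'nz as [[B1 [B2 [B3 B4]]] _].
      split; [|split; [|split]].
      - intros f [Hf _]; auto.
      - split; auto.
      - intros f g [? ?] [? ?]; split; auto.
      - intros f g Hg [? ?]; split; auto. }
    assert (ZIL : prod_zero I L).
    { apply pt_prod_zero. intros f g Hf [Hg _]. apply (prod_zero_pt _ _ _ _ ZI Hf Hg). }
    assert (ZLJ : prod_zero L J).
    { apply pt_prod_zero. intros f g [_ Hf] Hg x. rewrite Rmult_comm. apply (prod_zero_pt _ _ _ _ ZJ Hg Hf). }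
    assert (HvL : AG_vertex T L) by (split; auto; exists J; split; auto).
    exists 2%nat. split. auto with arith.
    apply (walk_adj T 1 I L J). refine (conj _ (conj _ (conj _ _))); auto.
    + intros E. apply NZ. apply pt_prod_zero. intros f g Hf Hg x.
      assert (J' f) by (apply E; auto). rewrite Rmult_comm. apply (prod_zero_pt _ _ _ _ ZJ Hg); auto.
    + apply (walk_adj T 0 L J J). refine (conj _ (conj _ (conj _ _))); auto.
      * intros E. apply NZ. apply pt_prod_zero. intros f g Hf Hg x.
        assert (I' g) by (apply E; auto). apply (prod_zero_pt _ _ _ _ ZI Hf); auto.
      * apply walk_0; auto.
  - assert (ZIJ' : prod_zero I' J').
    { apply pt_prod_zero. intros f g Hf Hg x.
      assert (Hfc : continuous_on T f) by (apply (ideal_cont T I'); [apply HI'nz|auto]).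
      assert (Hgc : continuous_on T g) by (apply (ideal_cont T J'); [apply HJ'nz|auto]).
      assert (L (fun x => f x * g x)).
      { split.
        - replace (fun x => f x * g x) with (fun x => g x * f x)
            by (apply functional_extensionality; intros; ring).
          apply HI'nz; auto.
        - apply HJ'nz; auto. }
      apply NNPP. intros Hx. apply HL. eauto. }
    exists 3%nat. split. auto with arith.
    apply (walk_adj T 2 I I' J). refine (conj _ (conj _ (conj _ _))); auto.
    { intros E. apply (self_not_zero T I HInz). apply (prod_zero_eqr I I' I); auto. apply ideal_eq_sym; auto. }
    apply (walk_adj T 1 I' J' J). refine (conj _ (conj _ (conj _ _))); auto.
    { intros E. apply (self_not_zero T I' HI'nz). apply (prod_zero_eqr I' J' I'); auto. apply ideal_eq_sym; auto. }
    apply (walk_adj T 0 J' J J). refine (conj _ (conj _ (conj _ _))); auto.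
    { intros E. apply (self_not_zero T J HJnz). apply (prod_zero_eql J' J J); auto. apply prod_zero_sym; auto. }
    apply prod_zero_sym; auto.
    apply walk_0; auto.
Qed.

Definition ind {X} (x0 y : X) : R := if excluded_middle_informative (y = x0) then 1 else 0.

Lemma ind_eq {X} (x0 : X) : ind x0 x0 = 1.
Proof. unfold ind; destruct (excluded_middle_informative (x0 = x0)); tauto. Qed.
Lemma ind_neq {X} (x0 y : X) : y <> x0 -> ind x0 y = 0.
Proof. unfold ind; destruct (excluded_middle_informative (y = x0)); tauto. Qed.

Lemma cont_ind {X} (T : topology X) x0 : T1 T -> isolated_point T x0 -> continuous_on T (ind x0).
Proof.
  intros HT1 Hiso V HV.
  destruct (classic (V 1)) as [V1|V1]; destruct (classic (V 0)) as [V0|V0].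
  - eapply open_ext; [|apply open_full]. intros y; unfold ind.
    destruct (excluded_middle_informative (y = x0)); tauto.
  - eapply open_ext; [|apply Hiso]. intros y; unfold ind.
    destruct (excluded_middle_informative (y = x0)); split; intros; subst; tauto.
  - eapply open_ext; [|apply (HT1 x0)]. intros y; unfold ind.
    destruct (excluded_middle_informative (y = x0)); split; intros; subst; tauto.
  - eapply open_ext; [|apply open_empty]. intros y; unfold ind.
    destruct (excluded_middle_informative (y = x0)); tauto.
Qed.

Definition Ge {X} (x0 y : X) : R := ind x0 y + (-1/2).

Lemma UB_E {X} (T : topology X) x0 : T1 T -> isolated_point T x0 -> (exists b, b <> x0) ->
  AG_vertex T (Zle T (Ge x0)) /\
  forall J, AG_vertex T J -> ideal_eq (Zle T (Ge x0)) J \/ AG_adj T (Zle T (Ge x0)) J \/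
    ((exists f, J f /\ f x0 <> 0) /\ AG_walk T 2 (Zle T (Ge x0)) J).
Proof.
  intros HT1 Hiso [b Hb].
  assert (HG : continuous_on T (Ge x0)) by (apply cont_plus; [apply cont_ind; auto | apply cont_const]).
  assert (HE : AG_vertex T (Zle T (Ge x0))).
  { apply (Zle_vertex T _ x0 b HG); unfold Ge; [rewrite ind_eq | rewrite ind_neq by auto]; lra. }
  assert (Eoff : forall u y, Zle T (Ge x0) u -> y <> x0 -> u y = 0).
  { intros u y [_ Hu] Hy. apply Hu. unfold Ge; rewrite ind_neq by auto; lra. }
  assert (Emem : Zle T (Ge x0) (fun x => rpos (Ge x0 x)) /\ rpos (Ge x0 x0) <> 0).
  { split. apply Zle_pos; auto. rewrite rpos_pos; unfold Ge; rewrite ind_eq; lra. }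
  split; auto. intros J HJ.
  destruct (classic (ideal_eq (Zle T (Ge x0)) J)) as [E|NE]; [left; auto|right].
  destruct (classic (exists f, J f /\ f x0 <> 0)) as [Hf|Hf].
  - right. split; auto. destruct Hf as [f [Hf Hfx]].
    pose proof HJ as [HJnz [K [HKnz ZK]]].
    assert (Kx0 : forall k, K k -> k x0 = 0).
    { intros k Hk. pose proof (prod_zero_pt _ _ _ _ ZK Hf Hk x0). destruct (Rmult_integral _ _ H); tauto. }
    assert (HvK : AG_vertex T K) by (split; auto; exists J; split; auto; apply prod_zero_sym; auto).
    apply (walk_adj T 1 _ K J). refine (conj _ (conj _ (conj _ _))); auto.
    + intros E. destruct Emem as [H1 H2]. apply H2. apply (Kx0 (fun x => rpos (Ge x0 x))). apply E; auto.
    + apply pt_prod_zero. intros u k Hu Hk y. destruct (classic (y = x0)) as [->|Hy].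
      * rewrite (Kx0 k Hk); ring.
      * rewrite (Eoff u y Hu Hy); ring.
    + apply (walk_adj T 0 K J J). refine (conj _ (conj _ (conj _ _))); auto.
      * intros E. apply Hfx. apply Kx0. apply E; auto.
      * apply prod_zero_sym; auto.
      * apply walk_0; auto.
  - left. refine (conj _ (conj _ (conj _ _))); auto.
    apply pt_prod_zero. intros u g Hu Hg y. destruct (classic (y = x0)) as [->|Hy].
    + assert (g x0 = 0) by (apply NNPP; intro; apply Hf; eauto). rewrite H; ring.
    + rewrite (Eoff u y Hu Hy); ring.
Qed.

Lemma walk_lt2 {X} (T : topology X) I J : ~ ideal_eq I J -> ~ prod_zero I J ->
  forall m, (m < 2)%nat -> ~ AG_walk T m I J.
Proof.
  intros H1 H2 m Hm Hw. destruct m as [|[|m]].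
  - apply H1, (walk0_inv T); auto.
  - apply H2, (walk1_inv T); auto.
  - lia.
Qed.

Lemma ecc_from {X} (T : topology X) I r :
  (forall J, AG_vertex T J -> exists n, (n <= r)%nat /\ AG_walk T n I J) ->
  (exists J, AG_vertex T J /\ forall m, (m < r)%nat -> ~ AG_walk T m I J) -> AG_ecc T I r.
Proof.
  intros Hub [J [HJ Hlb]]. split.
  - intros J' HJ'. destruct (Hub J' HJ') as [n [Hn Hw]].
    destruct (walk_min T n I J' Hw) as [m [Hm Hd]]. exists m. split; auto. lia.
  - exists J. split; auto. destruct (Hub J HJ) as [n [Hn Hw]].
    destruct (walk_min T n I J Hw) as [m [Hm Hd]].
    assert (m = r).
    { destruct (Nat.lt_ge_cases m r) as [Hlt|Hge]. exfalso; apply (Hlb m Hlt), Hd. lia. }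
    subst; auto.
Qed.

Lemma rad_lower {X} (T : topology X) r :
  (forall I, AG_vertex T I -> exists J, AG_vertex T J /\ forall m, (m < r)%nat -> ~ AG_walk T m I J) ->
  forall I k, AG_vertex T I -> AG_ecc T I k -> (r <= k)%nat.
Proof.
  intros H I k HI [Hall _]. destruct (H I HI) as [J [HJ Hlb]].
  destruct (Hall J HJ) as [m [Hm [Hw _]]].
  destruct (Nat.lt_ge_cases m r) as [Hlt|Hge]. exfalso; apply (Hlb m Hlt Hw). lia.
Qed.

Lemma walk_lt3 {X} (T : topology X) I J : ~ ideal_eq I J -> ~ prod_zero I J ->
  (forall L, nonzero_ideal T L -> prod_zero I L -> prod_zero L J -> False) ->
  forall m, (m < 3)%nat -> ~ AG_walk T m I J.
Proof.
  intros H1 H2 H3 m Hm Hw. destruct m as [|[|[|m]]].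
  - apply H1, (walk0_inv T); auto.
  - apply H2, (walk1_inv T); auto.
  - destruct (walk2_inv T I J Hw) as [K [A [B C]]]. eauto.
  - lia.
Qed.

Theorem mainTheorem12 (X : Type) (T : topology X) :
  tychonoff T -> (exists a b : X, a <> b) ->
  (card_eq2 X -> AG_rad T 1) /\
  (card_gt2 X -> (exists x, isolated_point T x) -> AG_rad T 2) /\
  (card_gt2 X -> (forall x, ~ isolated_point T x) -> AG_rad T 3).
Proof.
  intros Hty [a0 [b0 Hab0]]. split; [|split].
  -
    intros [a [b [Hab Hall]]].
    assert (Hiso : isolated_point T a).
    { unfold isolated_point. eapply open_ext; [|apply (proj1 Hty b)].
      intros y; split.
      - intros Hy. destruct (Hall y); tauto.
      - intros ->. auto. }
    assert (Hba : b <> a) by auto.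
    destruct (UB_E T a (proj1 Hty) Hiso (ex_intro _ b Hba)) as [HE HUB].
    set (E := Zle T (Ge a)) in *.
    set (M := Zle T (fun x => - Ge a x)).
    assert (HGc : continuous_on T (Ge a)) by (apply cont_plus; [apply cont_ind; auto; apply Hty | apply cont_const]).
    assert (Gaa : Ge a a = 1/2) by (unfold Ge; rewrite ind_eq; lra).
    assert (Gab : Ge a b = -1/2) by (unfold Ge; rewrite ind_neq by auto; lra).
    assert (HM : AG_vertex T M).
    { apply (Zle_vertex T _ b a). apply cont_opp; auto. lra. lra. }
    assert (NEM : ~ ideal_eq E M).
    { intros Eq. assert (HM' : M (fun x => rpos (Ge a x))) by (apply Eq; apply Zle_pos; auto).
      destruct HM' as [_ H]. specialize (H a). rewrite Gaa, rpos_pos in H; lra. }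
    assert (ZEM : prod_zero E M) by apply Zle_anti.
    split.
    + exists E. split; auto. apply ecc_from.
      * intros J HJ. destruct (HUB J HJ) as [Eq | [Adj | [[f [Hf Hfa]] W2]]].
        -- exists 0%nat. split. lia. split; auto.
        -- exists 1%nat. split. lia. apply (walk_adj T 0 E J J Adj). apply walk_0; auto.
        -- exists 0%nat. split. lia. split; auto.
           pose proof HJ as [[HJi _] [K [[_ [k [Hk [y Hy]]]] ZK]]].
           assert (ka : k a = 0).
           { pose proof (prod_zero_pt _ _ _ _ ZK Hf Hk a). destruct (Rmult_integral _ _ H); tauto. }
           assert (yb : y = b) by (destruct (Hall y) as [->| ->]; tauto).
           subst y.
           assert (Jb : forall g, J g -> g b = 0).
           { intros g Hg. pose proof (prod_zero_pt _ _ _ _ ZK Hg Hk b). destruct (Rmult_integral _ _ H); tauto. }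
           intros u. split.
           ++ intros Hu. assert (ub : u b = 0) by (apply (proj2 Hu); lra).
              assert (J (fun x => (u a / f a) * f x)) by (apply HJi; auto; apply cont_const).
              replace u with (fun x => (u a / f a) * f x); auto.
              apply functional_extensionality. intros x. destruct (Hall x) as [-> | ->].
              ** field; auto.
              ** rewrite Jb, ub; auto; ring.
           ++ intros Hu. split. apply (ideal_cont T J); auto.
              intros x Hx. destruct (Hall x) as [-> | ->]. lra. apply Jb; auto.
      * exists M. split; auto. intros m Hm Hw. assert (m = 0%nat) by lia. subst.
        apply NEM, (walk0_inv T); auto.
    + apply rad_lower. intros I HI.
      destruct (classic (ideal_eq I E)) as [Eq|NE].
      * exists M. split; auto. intros m Hm Hw. assert (m = 0%nat) by lia. subst.
        apply NEM. intros f. split; intros Hf.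
        -- apply (walk0_inv T) in Hw. apply Hw, Eq; auto.
        -- apply (walk0_inv T) in Hw. apply Eq, Hw; auto.
      * exists E. split; auto. intros m Hm Hw. assert (m = 0%nat) by lia. subst.
        apply NE, (walk0_inv T); auto.
  -
    intros Hgt [x0 Hiso].
    assert (Hb : exists b, b <> x0).
    { destruct (classic (a0 = x0)) as [->|H]. exists b0; auto. exists a0; auto. }
    destruct (UB_E T x0 (proj1 Hty) Hiso Hb) as [HE HUB].
    assert (UB : forall J, AG_vertex T J -> exists n, (n <= 2)%nat /\ AG_walk T n (Zle T (Ge x0)) J).
    { intros J HJ. destruct (HUB J HJ) as [Eq | [Adj | [_ W2]]].
      - exists 0%nat. split. lia. split; auto.
      - exists 1%nat. split. lia. apply (walk_adj T 0 _ J J Adj). apply walk_0; auto.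
      - exists 2%nat. split; auto. }
    assert (LB : forall I, AG_vertex T I -> exists J, AG_vertex T J /\ forall m, (m < 2)%nat -> ~ AG_walk T m I J).
    { intros I HI. destruct (LB2 T Hty Hgt I HI) as [J [HJ [N1 N2]]].
      exists J. split; auto. apply walk_lt2; auto. }
    split.
    + exists (Zle T (Ge x0)). split; auto. apply ecc_from; auto.
    + apply rad_lower; auto.
  -
    intros Hgt Hniso.
    assert (LB : forall I, AG_vertex T I -> exists J, AG_vertex T J /\ forall m, (m < 3)%nat -> ~ AG_walk T m I J).
    { intros I HI. destruct (LB3 T Hty Hniso I HI) as [J [HJ [N1 [N2 N3]]]].
      exists J. split; auto. apply walk_lt3; auto. }
    split.
    + destruct (separation T a0 b0 b0 Hty Hab0 Hab0) as [h [Hh [Ha [Hb _]]]].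
      set (G := fun x => h x + (-1/2)).
      assert (HG : continuous_on T G) by (apply cont_plus; auto; apply cont_const).
      assert (HI0 : AG_vertex T (Zle T G)) by (apply (Zle_vertex T G b0 a0 HG); unfold G; lra).
      exists (Zle T G). split; auto. apply ecc_from.
      * intros J HJ. apply UB_diam; auto.
      * apply LB; auto.
    + apply rad_lower; auto.
Qed.
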